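(* For every integer $d\ge0$, the class $\mathcal T_d$ is a Baker class.
   Context: A layering of a graph $G$ is a function $\lambda:V(G)\to\mathbb{Z}$ with $|\lambda(u)-\lambda(v)|\le1$ for every edge $uv$. An ordered graph is a finite graph with a linear ordering of its vertices; subgraphs inherit the restricted ordering. For an infinite sequence $\mathbf r=r_1,r_2,\dots$ of positive integers and an integer $s\ge0$, let $\mathrm{tail}_s(\mathbf r)=r_{s+1},r_{s+2},\dots$, $\mathrm{tail}(\mathbf r)=\mathrm{tail}_1(\mathbf r)$ and $\mathrm{head}(\mathbf r)=r_1$. The Baker game between Destroyer and Preserver has states $(G,\mathbf r)$ with $G$ an ordered graph and $\mathbf r$ an infinite sequence of positive integers. If $V(G)=\emptyset$ the game stops. Otherwise, in one round Destroyer chooses either Delete (the smallest vertex $v$ of $G$ is removed and the game proceeds to $(G-v,\mathrm{tail}(\mathbf r))$) or Restrict (Destroyer chooses a layering $\lambda$ of $G$, Preserver chooses an interval $I$ of at most $\mathrm{head}(\mathbf r)$ consecutive integers, and the game proceeds to $(G[\lambda^{-1}(I)],\mathrm{tail}(\mathbf r))$). Destroyer wins on $(G,\mathbf r)$ in $t$ rounds if he has a strategy such that, regardless of Preserver's choices, the game stops after at most $t$ rounds. A class $\mathcal C$ of ordered graphs is a Baker class if for every infinite sequence $\mathbf r$ of positive integers there is an integer $t$ such that for every $G\in\mathcal C$, Destroyer wins the Baker game on $(G,\mathbf r)$ in $t$ rounds. An ordered graph $G$ is chordal if for every vertex $v$, the neighbors of $v$ smaller than $v$ induce a clique; the number of such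 neighbors is the left-degree of $v$. $\mathcal T_d$ denotes the class of chordal ordered graphs of maximum left-degree at most $d$. *)

(* Defs.v *)
From HB Require Import structures.
From mathcomp Require Import all_boot all_order all_algebra.
Set Implicit Arguments. Unset Strict Implicit. Unset Printing Implicit Defensive.
Import Order.TTheory GRing.Theory Num.Theory.

(* An ordered graph: vertex set 'I_n, linearly ordered by the natural order
   on 'I_n, with a symmetric irreflexive adjacency relation. *)
Record ograph := OGraph {
  og_n : nat;
  og_adj : rel 'I_og_n;
  og_sym : symmetric og_adj;
  og_irr : irreflexive og_adj
}.

(* Infinite sequences of positive integers are functions nat -> nat
   (r 0 = r_1); positivity is a hypothesis where needed. *)
Definition seq_head (r : nat -> nat) : nat := r 0%N.
Definition seq_tail (r : nat -> nat) : nat -> nat := fun i => r i.+1.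

(* Game states are induced subgraphs G[S] of the initial ordered graph G,
   represented by the vertex set S (with inherited order and adjacency). *)

Definition del_min (n : nat) (S : {set 'I_n}) : {set 'I_n} :=
  S :\: [set v in S | [forall u in S, (v <= u)%N]].

Definition is_layering (G : ograph) (S : {set 'I_(og_n G)})
  (lam : 'I_(og_n G) -> int) : Prop :=
  forall u v, u \in S -> v \in S -> og_adj (o:=G) u v -> (`|lam u - lam v| <= 1)%R.

Definition restrict_to (G : ograph) (S : {set 'I_(og_n G)})
  (lam : 'I_(og_n G) -> int) (a : int) (k : nat) : {set 'I_(og_n G)} :=
  [set v in S | ((a <= lam v) && (lam v < a + k%:Z))%R].

Fixpoint destroyer_wins (G : ograph) (t : nat) (S : {set 'I_(og_n G)})
  (r : nat -> nat) {struct t} : Prop :=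
  S = set0 \/
  match t with
  | 0 => False
  | t'.+1 =>
      destroyer_wins (G:=G) t' (del_min S) (seq_tail r)
      \/ exists lam : 'I_(og_n G) -> int,
           is_layering (G:=G) S lam /\
           forall (a : int) (k : nat), (k <= seq_head r)%N ->
             destroyer_wins (G:=G) t' (restrict_to (G:=G) S lam a k) (seq_tail r)
  end.

Definition baker_class (C : ograph -> Prop) : Prop :=
  forall r : nat -> nat, (forall i, (0 < r i)%N) ->
  exists t : nat, forall G : ograph, C G -> destroyer_wins (G:=G) t [set: 'I_(og_n G)] r.

Definition left_nbr (G : ograph) (v u : 'I_(og_n G)) : bool :=
  og_adj (o:=G) v u && (u < v)%N.

Definition chordal (G : ograph) : Prop :=
  forall v u w : 'I_(og_n G),
    left_nbr v u -> left_nbr v w -> u != w -> og_adj (o:=G) u w.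

Definition left_degree (G : ograph) (v : 'I_(og_n G)) : nat :=
  #|[set u | left_nbr (G:=G) v u]|.

Definition class_T (d : nat) (G : ograph) : Prop :=
  chordal G /\ forall v, (left_degree (G:=G) v <= d)%N.

(* Main.v *)
Require Import Defs.
From HB Require Import structures.
From mathcomp Require Import all_boot all_order all_algebra.
From mathcomp Require Import zify.
Set Implicit Arguments. Unset Strict Implicit. Unset Printing Implicit Defensive.
Import Order.TTheory GRing.Theory Num.Theory.



Definition shift (s : nat) (r : nat -> nat) : nat -> nat := fun i => r (s + i).

Lemma wins_ext (G : ograph) t (S : {set 'I_(og_n G)}) r r' :
  (forall i, r i = r' i) -> destroyer_wins t S r -> destroyer_wins t S r'.
Proof.
elim: t S r r' => [|t IH] S r r' Hr /=.
  by case=> // ->; left.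
case=> [->|[Hd|[lam [Hl Hw]]]]; first by left.
- by right; left; apply: IH Hd => i; rewrite /seq_tail Hr.
- right; right; exists lam; split=> // a k Hk.
  apply: IH (Hw a k _) => [i|]; first by rewrite /seq_tail Hr.
  by rewrite /seq_head Hr.
Qed.

Lemma wins_mono (G : ograph) t t' (S : {set 'I_(og_n G)}) r :
  (t <= t')%N -> destroyer_wins t S r -> destroyer_wins t' S r.
Proof.
elim: t t' S r => [|t IH] [|t'] S r Htt' //=.
- by case=> // ->; left.
case=> [->|[Hd|[lam [Hl Hw]]]]; first by left.
- by right; left; apply: IH Hd.
- right; right; exists lam; split=> // a k Hk.
  by apply: IH (Hw a k Hk).
Qed.

Lemma del_min_sub n (S : {set 'I_n}) : del_min S \subset S.
Proof. by rewrite /del_min subsetDl. Qed.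

Lemma del_min_mono n (S S' : {set 'I_n}) : S' \subset S -> del_min S' \subset del_min S.
Proof.
move=> /subsetP H; apply/subsetP=> v; rewrite /del_min !inE.
case/andP=> Hn Hv; rewrite (H v Hv) andbT /=; move: Hn; rewrite Hv /=.
apply: contra => /forall_inP Hm; apply/forall_inP => u Hu; exact: Hm u (H u Hu).
Qed.

Lemma wins_sub (G : ograph) t (S S' : {set 'I_(og_n G)}) r :
  S' \subset S -> destroyer_wins t S r -> destroyer_wins t S' r.
Proof.
elim: t S S' r => [|t IH] S S' r Hs /=.
  by case=> // E; left; apply/eqP; rewrite -subset0 -E.
case=> [E|[Hd|[lam [Hl Hw]]]].
- by left; apply/eqP; rewrite -subset0 -E.
- by right; left; apply: IH Hd; apply: del_min_mono.
- right; right; exists lam; split.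
  + by move=> u v Hu Hv; apply: Hl; apply: (subsetP Hs).
  + move=> a k Hk; apply: IH (Hw a k Hk).
    apply/subsetP => v; rewrite /restrict_to !inE => /andP[Hv ->].
    by rewrite (subsetP Hs v Hv).
Qed.

Lemma wins_restrict (G : ograph) t (S : {set 'I_(og_n G)}) r (lam : 'I_(og_n G) -> int) :
  is_layering S lam ->
  (forall a k, (k <= seq_head r)%N -> destroyer_wins t (restrict_to S lam a k) (seq_tail r)) ->
  destroyer_wins t.+1 S r.
Proof. by move=> Hl Hw; right; right; exists lam. Qed.

Lemma wins_delete (G : ograph) t (S : {set 'I_(og_n G)}) r :
  destroyer_wins t (del_min S) (seq_tail r) -> destroyer_wins t.+1 S r.
Proof. by move=> H; right; left. Qed.



Lemma ex_min (T : finType) (X : {set T}) (f : T -> nat) (u0 : T) : u0 \in X ->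
  exists2 u, u \in X & forall w, w \in X -> (f u <= f w)%N.
Proof. move=> H; case: (arg_minnP f H) => u Hu Hm; by exists u. Qed.

Definition LS (G : ograph) (S : {set 'I_(og_n G)}) (v : 'I_(og_n G)) :
  {set 'I_(og_n G)} := [set u in S | left_nbr v u].

Lemma left_nbr_lt (G : ograph) (v u : 'I_(og_n G)) : left_nbr v u -> (u < v)%N.
Proof. by case/andP. Qed.

Lemma chordal_adj (G : ograph) (v u w : 'I_(og_n G)) : chordal G ->
  left_nbr v u -> left_nbr v w -> u != w ->
  (left_nbr u w || left_nbr w u).
Proof.
move=> Hc Hu Hw Hne; have Ha := Hc _ _ _ Hu Hw Hne.
rewrite /left_nbr Ha (@og_sym G w u) Ha /=.
by rewrite -neq_ltn; apply: contra Hne => /eqP E; apply/eqP/val_inj.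
Qed.

Lemma LL (G : ograph) (S : {set 'I_(og_n G)}) : chordal G ->
  exists lam : 'I_(og_n G) -> nat, forall v, v \in S ->
   (forall u, u \in S -> left_nbr v u -> (lam u <= lam v <= (lam u).+1)%N) /\
   (LS S v != set0 -> exists2 u, u \in LS S v & (lam u).+1 = lam v).
Proof.
move=> Hc.
suff H : forall m, exists lam : 'I_(og_n G) -> nat, forall v, v \in S -> (v < m)%N ->
   (forall u, u \in S -> left_nbr v u -> (lam u <= lam v <= (lam u).+1)%N) /\
   (LS S v != set0 -> exists2 u, u \in LS S v & (lam u).+1 = lam v).
  have [lam Hl] := H (og_n G); exists lam => v Hv; exact: Hl v Hv (ltn_ord v).
elim=> [|m [lam IH]]; first by exists (fun _ => 0%N).
case: (ltnP m (og_n G)) => Hm; last first.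
  exists lam => v Hv _; apply: IH Hv _; exact: leq_trans (ltn_ord v) Hm.
pose vm := Ordinal Hm.
have [E|[u0 Hu0]] := set_0Vmem (LS S vm).
- exists (fun v => if v == vm then 0%N else lam v) => v Hv Hvm.
  have [Evm|Nvm] := eqVneq v vm.
  + subst v; split; last by rewrite E eqxx.
    move=> u Hu Hl; have : u \in LS S vm by rewrite inE Hu Hl.
    by rewrite E inE.
  + have Hvm' : (v < m)%N.
      by rewrite ltnS leq_eqVlt in Hvm; case/orP: Hvm => // /eqP E'; case/eqP: Nvm; apply: val_inj.
    have [IH1 IH2] := IH v Hv Hvm'.
    have Hne : forall u, left_nbr v u -> u != vm.
      move=> u /left_nbr_lt Hu; apply/eqP => Eu; subst u.
      by move: (ltn_trans Hu Hvm'); rewrite /= ltnn.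
    split.
    * by move=> u Hu Hl; rewrite (negbTE (Hne u Hl)); apply: IH1.
    * move=> /IH2 [u Hu Hl]; exists u => //.
      by move: Hu; rewrite inE => /andP[_ /Hne /negbTE ->].
- have [u1 Hu1 Hmin] := ex_min lam Hu0.
  exists (fun v => if v == vm then (lam u1).+1 else lam v) => v Hv Hvm.
  have Hlt : forall u, left_nbr vm u -> (u < m)%N by move=> u /left_nbr_lt.
  have [Evm|Nvm] := eqVneq v vm.
  + subst v.
    have Hne : forall u, left_nbr vm u -> u != vm.
      move=> u /left_nbr_lt Hu; apply/eqP => Eu; subst u; by rewrite ltnn in Hu.
    split; last first.
      move=> _; exists u1 => //; move: Hu1; rewrite inE => /andP[_ /Hne /negbTE ->].
      by [].
    move=> u Hu Hl; rewrite ?eqxx (negbTE (Hne u Hl)) ?eqxx.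
    have HuL : u \in LS S vm by rewrite inE Hu Hl.
    rewrite ltnS (Hmin u HuL) andbT.
    have [->|Nu] := eqVneq u u1; first exact: leqnSn.
    move: (Hu1); rewrite inE => /andP[Hu1S Hl1].
    case/orP: (chordal_adj Hc Hl Hl1 Nu) => H.
    * by have [_ ] := andP (proj1 (IH u Hu (Hlt u Hl)) u1 Hu1S H).
    * by have [H1 _] := andP (proj1 (IH u1 Hu1S (Hlt u1 Hl1)) u Hu H); apply: leq_trans H1 _.
  + have Hvm' : (v < m)%N.
      by rewrite ltnS leq_eqVlt in Hvm; case/orP: Hvm => // /eqP E'; case/eqP: Nvm; apply: val_inj.
    have [IH1 IH2] := IH v Hv Hvm'.
    have Hne : forall u, left_nbr v u -> u != vm.
      move=> u /left_nbr_lt Hu; apply/eqP => Eu; subst u.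
      by move: (ltn_trans Hu Hvm'); rewrite /= ltnn.
    split.
    * by move=> u Hu Hl; rewrite (negbTE (Hne u Hl)); apply: IH1.
    * move=> /IH2 [u Hu Hl]; exists u => //.
      by move: Hu; rewrite inE => /andP[_ /Hne /negbTE ->].
Qed.



Lemma wins_small (G : ograph) k (b : int) (S : {set 'I_(og_n G)}) r :
  (forall v, v \in S -> (b <= (v : nat)%:Z < b + k%:Z)%R) -> destroyer_wins k S r.
Proof.
elim: k b S r => [|k IH] b S r H /=.
  left; apply/setP => v; rewrite inE; apply/negP => /H; lia.
right; left; apply: (IH (b + 1)%R) => v; rewrite /del_min !inE => /andP[Hn Hv].
move: Hn; rewrite Hv /= negb_forall_in => /existsP[u /andP[Hu]].
rewrite -ltnNge => Huv; have := H u Hu; have := H v Hv; lia.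
Qed.

Definition Winv (G : ograph) (d : nat) (S : {set 'I_(og_n G)})
  (lam : 'I_(og_n G) -> int) : Prop :=
 [/\ (forall u v, u \in S -> v \in S -> left_nbr v u -> (lam u <= lam v <= lam u + 1)%R),
     (forall v, v \in S -> (#|LS S v| <= d)%N)
   & (forall v, v \in S -> (d <= #|LS S v|)%N -> exists2 u, u \in LS S v & (lam u + 1 = lam v)%R)].

Definition Winst (G : ograph) (d : nat) (S : {set 'I_(og_n G)})
  (lam : 'I_(og_n G) -> int) (a : int) (k : nat) : Prop :=
  Winv d S lam /\ (forall v, v \in S -> (a <= lam v < a + k%:Z)%R).

Lemma LS_sub (G : ograph) (S S' : {set 'I_(og_n G)}) v :
  S' \subset S -> LS S' v \subset LS S v.
Proof.
move=> /subsetP H; apply/subsetP => u; rewrite !inE => /andP[Hu ->].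
by rewrite (H u Hu).
Qed.

Lemma Winv_sub (G : ograph) d (S S' : {set 'I_(og_n G)}) lam :
  S' \subset S -> Winv d S lam -> Winv d S' lam.
Proof.
move=> Hs [H1 H2 H3]; have Hs' := subsetP Hs; split.
- by move=> u v Hu Hv; apply: H1; apply: Hs'.
- move=> v Hv; apply: leq_trans (H2 v (Hs' v Hv)).
  by apply: subset_leq_card; apply: LS_sub.
- move=> v Hv Hd.
  have Hsub := LS_sub v Hs.
  have Hd' : (d <= #|LS S v|)%N by apply: leq_trans Hd (subset_leq_card Hsub).
  have [u Hu Hl] := H3 v (Hs' v Hv) Hd'.
  have E : LS S' v = LS S v.
    apply/eqP; rewrite eqEcard Hsub /=; apply: leq_trans (H2 v (Hs' v Hv)) Hd.
  by exists u; rewrite ?E.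
Qed.

Lemma Winst_sub (G : ograph) d (S S' : {set 'I_(og_n G)}) lam a k :
  S' \subset S -> Winst d S lam a k -> Winst d S' lam a k.
Proof.
move=> Hs [Hv H4]; split; first exact: Winv_sub Hv.
by move=> v Hv'; apply: H4; apply: (subsetP Hs).
Qed.



Definition CLprop (G : ograph) (S : {set 'I_(og_n G)}) (lam : 'I_(og_n G) -> int) (a : int)
  (mu : 'I_(og_n G) -> int) (typ : 'I_(og_n G) -> bool) (ext : 'I_(og_n G) -> int) v :=
  [/\ (lam v = a -> typ v /\ ext v = mu v),
      (forall u, u \in S -> left_nbr v u -> typ u = typ v /\ (`|ext u - ext v| <= 1)%R)
    & (lam v != a -> typ v -> exists2 x, x \in S & lam x = a /\ (x < v)%N)].

Lemma CLprop_ext (G : ograph) (S : {set 'I_(og_n G)}) lam a mu typ ext typ' ext' v :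
  typ' v = typ v -> ext' v = ext v ->
  (forall u, left_nbr v u -> typ' u = typ u /\ ext' u = ext u) ->
  CLprop S lam a mu typ ext v -> CLprop S lam a mu typ' ext' v.
Proof.
move=> Ht He Hu [C1 C2 C3]; split.
- by rewrite Ht He.
- move=> u HuS Hl; have [-> ->] := Hu u Hl; rewrite Ht He; exact: C2.
- by rewrite Ht.
Qed.

Lemma CL (G : ograph) d (S : {set 'I_(og_n G)}) lam a k (mu : 'I_(og_n G) -> int) :
  chordal G -> Winst d S lam a k -> is_layering [set v in S | lam v == a] mu ->
  exists typ ext, forall v, v \in S -> CLprop S lam a mu typ ext v.
Proof.
move=> Hc [[H1 _ _] H4] Hmu.
have HA : forall u v, u \in S -> v \in S -> left_nbr v u -> lam v = a -> lam u = a.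
  move=> u v Hu Hv Hl Ea; have := H1 u v Hu Hv Hl; have := H4 u Hu; lia.
suff H : forall m, exists typ ext, forall v, v \in S -> (v < m)%N -> CLprop S lam a mu typ ext v.
  have [typ [ext Hl]] := H (og_n G); exists typ, ext => v Hv; exact: Hl v Hv (ltn_ord v).
elim=> [|m [typ [ext IH]]]; first by exists (fun _ => true), (fun _ => 0%R).
case: (ltnP m (og_n G)) => Hm; last first.
  exists typ, ext => v Hv _; apply: IH Hv _; exact: leq_trans (ltn_ord v) Hm.
pose vm := Ordinal Hm.
have [tn [en Hnew]] : exists (tn : bool) (en : int), vm \in S ->
  CLprop S lam a mu (fun v => if v == vm then tn else typ v)
                    (fun v => if v == vm then en else ext v) vm.
  have Hne : forall u, left_nbr vm u -> (u == vm) = false.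
    move=> u /left_nbr_lt Hu; apply/negbTE/eqP => Eu; subst u; by rewrite ltnn in Hu.
  have Hlt : forall u, left_nbr vm u -> (u < m)%N by move=> u /left_nbr_lt.
  case: (boolP (lam vm == a)) => [/eqP Ea|Na].
  - exists true, (mu vm) => HvS; split; [by rewrite eqxx | | by rewrite Ea eqxx].
    move=> u Hu Hl; rewrite (Hne u Hl).
    have Eu := HA u vm Hu HvS Hl Ea.
    have [C1 _ _] := IH u Hu (Hlt u Hl).
    have [-> ->] := C1 Eu; split; first by rewrite eqxx.
    rewrite distrC eqxx; apply: (Hmu vm u); rewrite ?inE ?HvS ?Hu ?Ea ?Eu ?eqxx //.
    by case/andP: Hl.
  - have [E|[u0 Hu0]] := set_0Vmem (LS S vm).
    + exists false, 0%R => HvS; split; rewrite ?eqxx //.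
      * by move=> Ea; rewrite Ea eqxx in Na.
      * move=> u Hu Hl; have : u \in LS S vm by rewrite inE Hu Hl.
        by rewrite E inE.
    + move: (Hu0); rewrite inE => /andP[Hu0S Hl0].
      exists (typ u0), (ext u0) => HvS; split; rewrite ?eqxx //.
      * by move=> Ea; rewrite Ea eqxx in Na.
      * move=> u Hu Hl; rewrite (Hne u Hl).
        have [->|Nu] := eqVneq u u0; first by rewrite subrr normr0.
        case/orP: (chordal_adj Hc Hl Hl0 Nu) => Hl'.
        -- have [_ C2 _] := IH u Hu (Hlt u Hl).
           by have [-> ?] := C2 u0 Hu0S Hl'; rewrite distrC.
        -- have [_ C2 _] := IH u0 Hu0S (Hlt u0 Hl0).
           exact: C2 u Hu Hl'.
      * move=> _ Ht.
        case: (boolP (lam u0 == a)) => [/eqP Ea0|Na0].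
        -- by exists u0 => //; split => //; apply: left_nbr_lt.
        -- have [_ _ C3] := IH u0 Hu0S (Hlt u0 Hl0).
           have [x Hx [Ex Hxl]] := C3 Na0 Ht; exists x => //; split => //.
           by apply: ltn_trans Hxl (left_nbr_lt Hl0).
exists (fun v => if v == vm then tn else typ v), (fun v => if v == vm then en else ext v).
move=> v Hv Hvm.
have [Evm|Nvm] := eqVneq v vm; first by subst v; apply: Hnew.
have Hvm' : (v < m)%N.
  by rewrite ltnS leq_eqVlt in Hvm; case/orP: Hvm => // /eqP E'; case/eqP: Nvm; apply: val_inj.
apply: CLprop_ext (IH v Hv Hvm'); rewrite ?(negbTE Nvm) //.
move=> u /left_nbr_lt Hu.
have -> : (u == vm) = false.
  apply/negbTE/eqP => Eu; subst u; move: (ltn_trans Hu Hvm'); by rewrite /= ltnn.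
by [].
Qed.



Lemma finite_max (P : nat -> nat -> Prop) :
  (forall s t t', P s t -> (t <= t')%N -> P s t') -> (forall s, exists t, P s t) ->
  forall N, exists T, forall s, (s <= N)%N -> P s T.
Proof.
move=> Hm Hex; elim=> [|N [T IH]].
  have [t Ht] := Hex 0%N; exists t => s; rewrite leqn0 => /eqP ->; exact: Ht.
have [t Ht] := Hex N.+1; exists (maxn T t) => s; rewrite leq_eqVlt ltnS.
case/orP => [/eqP ->|Hs].
- by apply: Hm Ht _; apply: leq_maxr.
- by apply: Hm (IH s Hs) _; apply: leq_maxl.
Qed.

Lemma WB (G : ograph) d (S : {set 'I_(og_n G)}) lam a k :
  Winst d S lam a k.+1 -> (forall v, v \in S -> lam v != a) -> Winst d S lam (a + 1) k.
Proof.
move=> [Hv H4] Hn; split => // v Hv'; have := H4 v Hv'; have := Hn v Hv'.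
move=> /eqP; lia.
Qed.

Lemma SE1 (G : ograph) (S T : {set 'I_(og_n G)}) (lam : 'I_(og_n G) -> int) a :
  T \subset S -> (forall v, v \in S -> lam v = a -> v \in T) ->
  [set v in T | lam v == a] = [set v in S | lam v == a].
Proof.
move=> /subsetP Hs H; apply/setP => v; rewrite !inE.
case HvT: (v \in T); first by rewrite (Hs v HvT).
case HvS: (v \in S) => //.
by case Ha: (lam v == a) => //; rewrite (H v HvS (eqP Ha)) in HvT.
Qed.

Lemma SE2 (G : ograph) (T : {set 'I_(og_n G)}) (lam : 'I_(og_n G) -> int) a :
  (forall u, u \in T -> lam u != a -> exists2 x, x \in T & lam x = a /\ (x < u)%N) ->
  [set v in del_min T | lam v == a] = del_min [set v in T | lam v == a].
Proof.
move=> H; apply/setP => v; rewrite /del_min !inE.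
case: (boolP (v \in T)) => HvT; last by rewrite !andbF.
case: (boolP (lam v == a)) => /= Ha; rewrite ?andbF ?andbT //=; congr negb.
apply/forall_inP/forall_inP => Hm u.
- by rewrite inE => /andP[Hu _]; apply: Hm.
- move=> Hu; case: (boolP (lam u == a)) => Hua.
  + by apply: Hm; rewrite inE Hu Hua.
  + have [x Hx [Ex Hxu]] := H u Hu Hua.
    have := Hm x; rewrite inE Hx Ex eqxx => /(_ isT) Hvx.
    exact: leq_trans Hvx (ltnW Hxu).
Qed.

Lemma SE3 (G : ograph) (T : {set 'I_(og_n G)}) (lam ext mu : 'I_(og_n G) -> int) a b k :
  (forall v, v \in T -> lam v = a -> ext v = mu v) ->
  [set v in restrict_to T ext b k | lam v == a] = restrict_to [set v in T | lam v == a] mu b k.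
Proof.
move=> H; apply/setP => v; rewrite /restrict_to !inE.
case: (boolP (v \in T)) => HvT //=; case: (boolP (lam v == a)) => /= Ha; rewrite ?andbF //.
by rewrite (H v HvT (eqP Ha)) andbT.
Qed.

Definition Mprop (d : nat) : Prop :=
  forall r : nat -> nat, exists t, forall G : ograph, chordal G ->
  forall S : {set 'I_(og_n G)}, (forall v, v \in S -> (#|LS S v| <= d)%N) ->
  destroyer_wins t S r.

Definition Wprop (d k : nat) : Prop :=
  forall r : nat -> nat, exists t, forall G : ograph, chordal G ->
  forall (S : {set 'I_(og_n G)}) lam a, Winst d S lam a k -> destroyer_wins t S r.

Lemma W0 d : Wprop d 0.
Proof.
move=> r; exists 0%N => G _ S lam a [_ H4] /=; left.
apply/setP => v; rewrite inE; apply/negP => /H4; lia.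
Qed.

Lemma M0 : Mprop 0.
Proof.
move=> r; exists (r 0%N).+1 => G _ S HS /=; right; right.
exists (fun v => Posz (v : nat)); split.
- move=> u v Hu Hv Ha; exfalso.
  have Hemp : forall w, w \in S -> LS S w = set0.
    by move=> w Hw; apply/cards0_eq; have := HS w Hw; rewrite leqn0 => /eqP.
  have Hne : u != v by apply: contraTneq Ha => ->; rewrite (@og_irr G).
  case: (ltngtP u v) => Huv.
  + have : u \in LS S v by rewrite inE Hu /left_nbr (@og_sym G) Ha Huv.
    by rewrite Hemp // inE.
  + have : v \in LS S u by rewrite inE Hv /left_nbr Ha Huv.
    by rewrite Hemp // inE.
  + by case/eqP: Hne; apply: val_inj.
- move=> b k Hk; apply: (wins_mono Hk); apply: (wins_small (b := b)) => v.
  by rewrite /restrict_to inE => /andP[_ ->].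
Qed.



Lemma A_deg (G : ograph) d (S : {set 'I_(og_n G)}) lam a k :
  Winst d.+1 S lam a k -> forall v, v \in [set v in S | lam v == a] ->
  (#|LS [set v in S | lam v == a] v| <= d)%N.
Proof.
move=> [[_ H2 H3] H4] v; rewrite inE => /andP[Hv /eqP Ha].
have Hsub : LS [set v in S | lam v == a] v \subset LS S v.
  by apply: LS_sub; apply/subsetP => w; rewrite inE => /andP[].
apply: leq_trans (subset_leq_card Hsub) _.
rewrite leqNgt; apply/negP => Hd.
have [u Hu Hl] := H3 v Hv Hd.
move: Hu; rewrite inE => /andP[HuS _]; have := H4 u HuS; lia.
Qed.

Lemma typ_eq (G : ograph) (S : {set 'I_(og_n G)}) lam a mu typ ext u v :
  (forall v, v \in S -> CLprop S lam a mu typ ext v) ->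
  u \in S -> v \in S -> og_adj u v -> typ u = typ v /\ (`|ext u - ext v| <= 1)%R.
Proof.
move=> H Hu Hv Ha; case: (ltngtP u v) => Huv.
- have [_ C2 _] := H v Hv; apply: C2 Hu _; by rewrite /left_nbr (@og_sym G) Ha Huv.
- have [_ C2 _] := H u Hu.
  have Hl : left_nbr u v by rewrite /left_nbr Ha Huv.
  have [E1 E2] := C2 v Hv Hl; by rewrite E1 distrC.
- have -> : u = v by apply: val_inj.
  by rewrite subrr normr0.
Qed.

Lemma Wstep d k : Mprop d -> Wprop d.+1 k -> Wprop d.+1 k.+1.
Proof.
move=> HM HW r.
pose rho := fun i => r (2 * i + 1)%N.
have [tA HA] := HM rho.
have [tB HB] := finite_max (P := fun s t => forall G, chordal G -> forall S lam a,
   Winst d.+1 S lam a k -> destroyer_wins t S (shift s r))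
  (fun s t t' H Htt' G Hc S lam a Hi => wins_mono Htt' (H G Hc S lam a Hi))
  (fun s => HW (shift s r)) (2 * tA + 2).
exists (2 * tA + 2 + tB)%N => G Hc S0 lam a Hi0.
have Hempty : forall p (S : {set 'I_(og_n G)}) jj, (p <= tA)%N -> Winst d.+1 S lam a k.+1 ->
    [set v in S | lam v == a] = set0 -> destroyer_wins (2 * jj + 2 + tB) S (shift (2 * p) r).
  move=> p S jj Hp HSi E.
  have Hall : forall v, v \in S -> lam v != a.
    move=> v Hv; apply/negP => Ha.
    have : v \in [set v in S | lam v == a] by rewrite inE Hv Ha.
    by rewrite E inE.
  apply: (@wins_mono _ tB); first lia.
  apply: (HB (2 * p)%N _ G Hc S lam (a + 1)%R); first lia.
  exact: WB HSi Hall.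
have Htail : forall s i, seq_tail (shift s r) i = shift s.+1 r i.
  by move=> s i; rewrite /seq_tail /shift addSnnS.
suff Claim : forall j p (S : {set 'I_(og_n G)}), (p + j <= tA)%N -> Winst d.+1 S lam a k.+1 ->
    destroyer_wins j [set v in S | lam v == a] (shift p rho) ->
    destroyer_wins (2 * j + 2 + tB) S (shift (2 * p) r).
  apply: wins_ext (Claim tA 0%N S0 _ Hi0 _) => //.
  apply: wins_ext (HA G Hc _ (A_deg Hi0)) => i.
  by rewrite /shift add0n.
elim=> [|j IH] p S Hpj HSi Hwin.
  case: Hwin => // E; apply: Hempty => //; lia.
case: Hwin => [E|Hwin]; first by apply: Hempty => //; lia.
have Hmu0 : is_layering [set v in S | lam v == a] (fun _ => 0%R).
  by move=> u v _ _ _; rewrite subrr normr0.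
have [typ [ext HCL]] := CL Hc HSi Hmu0.
pose T := [set v in S | typ v].
have HTsub : T \subset S by apply/subsetP => v; rewrite inE => /andP[].
have HAT : forall v, v \in S -> lam v = a -> v \in T.
  by move=> v Hv Ha; have [C1 _ _] := HCL v Hv; rewrite inE Hv (proj1 (C1 Ha)).
have HTx : forall u, u \in T -> lam u != a -> exists2 x, x \in T & lam x = a /\ (x < u)%N.
  move=> u; rewrite inE => /andP[Hu Ht] Hn.
  have [_ _ C3] := HCL u Hu; have [x Hx [Ex Hxu]] := C3 Hn Ht.
  by exists x => //; apply: HAT.
have HTi : Winst d.+1 T lam a k.+1 by apply: Winst_sub HSi.
have HAeq : [set v in T | lam v == a] = [set v in S | lam v == a] by apply: SE1.
suff HT : destroyer_wins (2 * j + 2 + tB).+1 T (shift (2 * p).+1 r).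
  apply: (@wins_mono _ (2 * j + 2 + tB).+2); first lia.
  apply: (wins_restrict (lam := fun v => if typ v then 0%R else Posz (r (2 * p)%N).+1)).
  - move=> u v Hu Hv Ha; have [-> _] := typ_eq HCL Hu Hv Ha.
    by rewrite subrr normr0.
  - move=> b k' Hk'; rewrite /seq_head /shift addn0 in Hk'.
    case: (boolP ((b <= 0) && (0 < b + Posz k'))%R) => Hb.
    + apply: (@wins_sub _ _ T).
        apply/subsetP => v; rewrite /restrict_to !inE => /andP[Hv]; rewrite Hv /=.
        case: (typ v) => //; move: Hb => /andP[]; lia.
      by apply: wins_ext HT => i; rewrite Htail.
    + pose D := [set v in S | ~~ typ v].
      apply: (@wins_sub _ _ D).
        apply/subsetP => v; rewrite /restrict_to !inE => /andP[Hv]; rewrite Hv /=.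
        by case: (typ v) => //= Hbb; move: Hb; rewrite Hbb.
      have HDi : Winst d.+1 D lam (a + 1)%R k.
        apply: WB; first by apply: Winst_sub HSi; apply/subsetP => v; rewrite inE => /andP[].
        move=> v; rewrite inE => /andP[Hv Ht]; apply/eqP => Ea.
        by have [C1 _ _] := HCL v Hv; rewrite (proj1 (C1 Ea)) in Ht.
      apply: (@wins_mono _ tB); first lia.
      apply: wins_ext (HB (2 * p).+1 _ G Hc D lam (a + 1)%R HDi) => [i|]; first by rewrite Htail.
      lia.
case: Hwin => [Hd|[mu [Hmu Hw]]].
- apply: wins_delete.
  apply: wins_ext (IH p.+1 (del_min T) _ _ _) => [i|||]; first by rewrite Htail /shift; congr r; lia.
  + lia.
  + by apply: Winst_sub HTi; apply: del_min_sub.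
  + rewrite SE2 // HAeq; apply: wins_ext Hd => i.
    by rewrite /seq_tail /shift /rho; congr r; lia.
- have Hmu' : is_layering [set v in T | lam v == a] mu by rewrite HAeq.
  have [typ2 [ext2 H2]] := CL Hc HTi Hmu'.
  apply: (wins_restrict (lam := ext2)).
  + by move=> u v Hu Hv Ha; have [_ ->] := typ_eq H2 Hu Hv Ha.
  + move=> b k' Hk'.
    apply: wins_ext (IH p.+1 (restrict_to T ext2 b k') _ _ _) => [i|||]; first by rewrite Htail /shift; congr r; lia.
    * lia.
    * apply: Winst_sub HTi; apply/subsetP => v; rewrite /restrict_to inE => /andP[->]; done.
    * rewrite (@SE3 _ _ _ _ mu); last by move=> v Hv Ha; have [C1 _ _] := H2 v Hv; exact: proj2 (C1 Ha).
      rewrite HAeq; apply: wins_ext (Hw b k' _) => [i|].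
        by rewrite /seq_tail /shift /rho; congr r; lia.
      move: Hk'; rewrite /seq_head /shift /rho.
      by have -> : (2 * (p + 0) + 1 = (2 * p).+1 + 0)%N by lia.
Qed.



Lemma Wall d k : Mprop d -> Wprop d.+1 k.
Proof. by move=> HM; elim: k => [|k IH]; [apply: W0 | apply: Wstep]. Qed.

Lemma Mstep d : Mprop d -> Mprop d.+1.
Proof.
move=> HM r.
have [T HT] := finite_max (P := fun k t => forall G, chordal G -> forall S lam a,
   Winst d.+1 S lam a k -> destroyer_wins t S (shift 1 r))
  (fun s t t' H Htt' G Hc S lam a Hi => wins_mono Htt' (H G Hc S lam a Hi))
  (fun k => Wall k HM (shift 1 r)) (r 0%N).
exists T.+1 => G Hc S HS.
have [lam Hlam] := LL S Hc.
pose lamZ := fun v => Posz (lam v).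
have HWv : Winv d.+1 S lamZ.
  split.
  - move=> u v Hu Hv Hl; have [H1 _] := Hlam v Hv; have := H1 u Hu Hl.
    rewrite /lamZ; lia.
  - exact: HS.
  - move=> v Hv Hd; have [_ H2] := Hlam v Hv.
    have Hne : LS S v != set0.
      by rewrite -card_gt0; apply: leq_trans Hd.
    have [u Hu Hl] := H2 Hne; exists u => //; rewrite /lamZ -Hl; lia.
apply: (wins_restrict (lam := lamZ)).
- move=> u v Hu Hv Ha; case: (ltngtP u v) => Huv.
  + have [[H1 _] _] := (Hlam v Hv, 0).
    have := H1 u Hu; rewrite /left_nbr (@og_sym G) Ha Huv => /(_ isT).
    rewrite /lamZ; lia.
  + have [H1 _] := Hlam u Hu.
    have := H1 v Hv; rewrite /left_nbr Ha Huv => /(_ isT).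
    rewrite /lamZ; lia.
  + have -> : u = v by apply: val_inj.
    by rewrite subrr normr0.
- move=> b k Hk.
  apply: wins_ext (HT k Hk G Hc _ lamZ b _) => [i|]; first by rewrite /shift /seq_tail add1n.
  split.
  + by apply: Winv_sub HWv; apply/subsetP => v; rewrite /restrict_to inE => /andP[].
  + by move=> v; rewrite /restrict_to inE => /andP[_].
Qed.

Lemma Mall d : Mprop d.
Proof. by elim: d => [|d IH]; [apply: M0 | apply: Mstep]. Qed.

Theorem mainTheorem9 (d : nat) : baker_class (class_T d).
Proof.
move=> r _; have [t Ht] := Mall d r; exists t => G [Hc Hd].
apply: Ht Hc _ _ => v _.
have -> : LS [set: 'I_(og_n G)] v = [set u | left_nbr v u].
  by apply/setP => u; rewrite !inE.
exact: Hd.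
Qed.
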